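(* Let $a<0$ and $m\in(-1,0)$, and let $L_a(M,m)$ be as defined in the context. If $0<M_1<M_2$ and $\beta_+(M_j)<0$ for $j=1,2$, then $L_a(M_1,m)>L_a(M_2,m)$. Moreover $L_a(0,m)=0$ and $\lim_{M\to+\infty}L_a(M,m)=a+\ln(1-a)$.
   Context: Let $r(x)=ax/(1+x)$ for $x>-1$. For $M\ge0$, $m\in(-1,0)$ set $\alpha_+(M)=\frac{M}{r(M)}-\frac{r(M)}{2ar(m)}=\frac{1+M}{a}-\frac{M(1+m)}{2am(1+M)}$, $\beta_+(M)=\frac{M}{r(M)}+\frac{r(M)}{2ar(m)}=\frac{1+M}{a}+\frac{M(1+m)}{2am(1+M)}$, and $z_+(t)=M$ for $t\le\alpha_+$, $z_+(t)=M+\frac{ar(m)}{2}(t-\alpha_+)^2$ for $\alpha_+\le t\le\beta_+$, $z_+(t)=r(M)t$ for $\beta_+\le t\le0$. Define $L_a(M,m)=\int_{-1}^0 r(z_+(s))\,ds$. *)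

(* Defs.v *)
From Stdlib Require Import Reals Lra.
From Coquelicot Require Import Coquelicot.
Open Scope R_scope.

Definition r (a x : R) : R := a * x / (1 + x).

(* alpha_+(M), beta_+(M), in the form valid also at M = 0 *)
Definition alpha_p (a m M : R) : R :=
  (1 + M) / a - M * (1 + m) / (2 * a * m * (1 + M)).
Definition beta_p (a m M : R) : R :=
  (1 + M) / a + M * (1 + m) / (2 * a * m * (1 + M)).

Definition z_p (a m M t : R) : R :=
  if Rle_dec t (alpha_p a m M) then M
  else if Rle_dec t (beta_p a m M) then
    M + (a * r a m / 2) * (t - alpha_p a m M) ^ 2
  else r a M * t.

Definition L (a M m : R) : R := RInt (fun s => r a (z_p a m M s)) (-1) 0.

(* Main.v *)
Require Import Defs.
From Stdlib Require Import Reals Lra Psatz FunctionalExtensionality.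
From Coquelicot Require Import Coquelicot.
Open Scope R_scope.

Definition zz (M c rM al be t : R) : R :=
  if Rle_dec t al then M
  else if Rle_dec t be then M + (c / 2) * (t - al) ^ 2
  else rM * t.

Lemma rbe_le (M c rM al be : R) (HM : 0 < M) (Hc : c < 0) (HrM : rM < 0) (Hab : al < be)
  (H1 : forall s, M + (c/2) * (s - al)^2 = rM * s + (c/2) * (s - be)^2)
  (H2 : rM * (al + be) = 2 * M) : rM * be <= M.
Proof. nra. Qed.

Lemma ral_ge (M c rM al be : R) (HM : 0 < M) (Hc : c < 0) (HrM : rM < 0) (Hab : al < be)
  (H1 : forall s, M + (c/2) * (s - al)^2 = rM * s + (c/2) * (s - be)^2)
  (H2 : rM * (al + be) = 2 * M) : M <= rM * al.
Proof. nra. Qed.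

Lemma par_le_M (M c rM al be : R) (HM : 0 < M) (Hc : c < 0) (HrM : rM < 0) (Hab : al < be)
  (H1 : forall s, M + (c/2) * (s - al)^2 = rM * s + (c/2) * (s - be)^2)
  (H2 : rM * (al + be) = 2 * M) s : M + (c/2) * (s - al)^2 <= M.
Proof. assert (0 <= (s-al)^2) by (apply pow2_ge_0). nra. Qed.

Lemma par_le_line (M c rM al be : R) (HM : 0 < M) (Hc : c < 0) (HrM : rM < 0) (Hab : al < be)
  (H1 : forall s, M + (c/2) * (s - al)^2 = rM * s + (c/2) * (s - be)^2)
  (H2 : rM * (al + be) = 2 * M) s : M + (c/2) * (s - al)^2 <= rM * s.
Proof. rewrite H1. assert (0 <= (s-be)^2) by (apply pow2_ge_0). nra. Qed.

Lemma zz_le_M (M c rM al be : R) (HM : 0 < M) (Hc : c < 0) (HrM : rM < 0) (Hab : al < be)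
  (H1 : forall s, M + (c/2) * (s - al)^2 = rM * s + (c/2) * (s - be)^2)
  (H2 : rM * (al + be) = 2 * M) t : zz M c rM al be t <= M.
Proof.
  unfold zz. destruct (Rle_dec t al). lra.
  destruct (Rle_dec t be). apply (par_le_M M c rM al be HM Hc HrM Hab H1 H2).
  pose proof (rbe_le M c rM al be HM Hc HrM Hab H1 H2). nra.
Qed.

Lemma zz_le_line (M c rM al be : R) (HM : 0 < M) (Hc : c < 0) (HrM : rM < 0) (Hab : al < be)
  (H1 : forall s, M + (c/2) * (s - al)^2 = rM * s + (c/2) * (s - be)^2)
  (H2 : rM * (al + be) = 2 * M) t : zz M c rM al be t <= rM * t.
Proof.
  unfold zz. destruct (Rle_dec t al). pose proof (ral_ge M c rM al be HM Hc HrM Hab H1 H2). nra.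
  destruct (Rle_dec t be). apply (par_le_line M c rM al be HM Hc HrM Hab H1 H2). lra.
Qed.

Lemma zz_nonneg (M c rM al be : R) (HM : 0 < M) (Hc : c < 0) (HrM : rM < 0) (Hab : al < be)
  (H1 : forall s, M + (c/2) * (s - al)^2 = rM * s + (c/2) * (s - be)^2)
  (H2 : rM * (al + be) = 2 * M) t : be <= 0 -> t <= 0 -> 0 <= zz M c rM al be t.
Proof.
  intros hb ht. unfold zz. destruct (Rle_dec t al). lra.
  destruct (Rle_dec t be).
  - assert (E := H1 be). replace (be - be) with 0 in E by ring.
    assert (0 <= rM * be) by nra.
    assert ((t-al)^2 <= (be-al)^2) by nra. nra.
  - nra.
Qed.

Lemma zz_witness (M c rM al be : R) (HM : 0 < M) (Hc : c < 0) (HrM : rM < 0) (Hab : al < be)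
  (H1 : forall s, M + (c/2) * (s - al)^2 = rM * s + (c/2) * (s - be)^2)
  (H2 : rM * (al + be) = 2 * M) t : exists h u, zz M c rM al be t = h + (c/2)*(t-u)^2 /\
  forall s, h + (c/2)*(s-u)^2 <= M /\ h + (c/2)*(s-u)^2 <= rM * s.
Proof.
  unfold zz. destruct (Rle_dec t al).
  - exists M, t. split. replace (t-t) with 0 by ring. ring.
    intros s. split.
    + assert (0 <= (s-t)^2) by (apply pow2_ge_0). nra.
    + pose proof (par_le_line M c rM al be HM Hc HrM Hab H1 H2 (s + (al - t))).
      replace (s + (al - t) - al) with (s - t) in H by ring. nra.
  - destruct (Rle_dec t be).
    + exists M, al. split. reflexivity. intros s; split.
      apply (par_le_M M c rM al be HM Hc HrM Hab H1 H2). apply (par_le_line M c rM al be HM Hc HrM Hab H1 H2).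
    + exists (M + rM * (t - be)), (al + (t - be)). split.
      * assert (E := H1 be). replace (be - be) with 0 in E by ring.
        replace (t - (al + (t - be))) with (be - al) by ring. nra.
      * intros s. pose proof (par_le_M M c rM al be HM Hc HrM Hab H1 H2 (s - (t - be))).
        pose proof (par_le_line M c rM al be HM Hc HrM Hab H1 H2 (s - (t - be))).
        replace (s - (t - be) - al) with (s - (al + (t - be))) in * by ring.
        split; nra.
Qed.

Lemma zz_lt (M1 M2 c rM1 rM2 al1 be1 al2 be2 t : R) :
  0 < M1 -> c < 0 -> rM1 < 0 -> al1 < be1 ->
  (forall s, M1 + (c/2) * (s - al1)^2 = rM1 * s + (c/2) * (s - be1)^2) ->
  rM1 * (al1 + be1) = 2 * M1 ->
  0 < M2 -> rM2 < 0 -> al2 < be2 ->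
  (forall s, M2 + (c/2) * (s - al2)^2 = rM2 * s + (c/2) * (s - be2)^2) ->
  rM2 * (al2 + be2) = 2 * M2 ->
  M1 < M2 -> rM2 < rM1 -> be2 < 0 -> t < 0 ->
  zz M1 c rM1 al1 be1 t < zz M2 c rM2 al2 be2 t.
Proof.
  intros HM1 Hc Hr1 Hab1 H11 H21 HM2 Hr2 Hab2 H12 H22 HM Hr Hb2 Ht.
  assert (B1 : zz M1 c rM1 al1 be1 t <= M1) by (eapply zz_le_M; eauto).
  assert (B2 : zz M1 c rM1 al1 be1 t <= rM1 * t) by (eapply zz_le_line; eauto).
  assert (W : exists h u, zz M1 c rM1 al1 be1 t = h + (c/2)*(t-u)^2 /\
    forall s, h + (c/2)*(s-u)^2 <= M1 /\ h + (c/2)*(s-u)^2 <= rM1 * s)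
    by (eapply zz_witness; eauto).
  destruct W as [h [u [Eq Hw]]].
  unfold zz at 2. destruct (Rle_dec t al2). lra.
  destruct (Rle_dec t be2).
  - rewrite Eq.
    destruct (Hw al2) as [Wa _]. destruct (Hw be2) as [_ Wb].
    assert (E := H12 be2). replace (be2 - be2) with 0 in E by ring.
    replace (al2 - al2) with 0 in * by ring.
    set (Q := fun s => h + c / 2 * (s - u) ^ 2).
    set (P := fun s => M2 + c / 2 * (s - al2) ^ 2).
    assert (Id : (Q t - P t) * (be2 - al2) = (Q al2 - P al2) * (be2 - t) + (Q be2 - P be2) * (t - al2))
      by (unfold Q, P; ring).
    assert (X1 : Q al2 - P al2 < 0) by (unfold Q, P; replace (al2 - al2) with 0 by ring; lra).
    assert (X2 : Q be2 - P be2 < 0) by (unfold Q, P; nra).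
    assert (Q t - P t < 0) by nra.
    unfold Q, P in H. lra.
  - nra.
Qed.

Definition zc (M c rM al be t : R) : R :=
  let mn := (t + be - Rabs (t - be)) / 2 in
  let cl := (al + mn + Rabs (al - mn)) / 2 in
  M + (c/2) * ((cl - al) * (cl - al)) + rM * ((t - be + Rabs (t - be)) / 2).

Lemma zz_zc M c rM al be t : al < be ->
  (forall s, M + (c/2) * (s - al)^2 = rM * s + (c/2) * (s - be)^2) ->
  zz M c rM al be t = zc M c rM al be t.
Proof.
  intros Hab H1. unfold zz, zc.
  destruct (Rle_dec t al).
  - rewrite (Rabs_left1 (t - be)) by lra.
    replace ((t + be - - (t - be)) / 2) with t by field.
    rewrite (Rabs_pos_eq (al - t)) by lra.
    replace ((al + t + (al - t)) / 2) with al by field.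
    replace ((t - be + - (t - be)) / 2) with 0 by field. ring.
  - destruct (Rle_dec t be).
    + rewrite (Rabs_left1 (t - be)) by lra.
      replace ((t + be - - (t - be)) / 2) with t by field.
      rewrite (Rabs_left1 (al - t)) by lra.
      replace ((al + t + - (al - t)) / 2) with t by field.
      replace ((t - be + - (t - be)) / 2) with 0 by field. ring.
    + rewrite (Rabs_pos_eq (t - be)) by lra.
      replace ((t + be - (t - be)) / 2) with be by field.
      rewrite (Rabs_left1 (al - be)) by lra.
      replace ((al + be + - (al - be)) / 2) with be by field.
      replace ((t - be + (t - be)) / 2) with (t - be) by field.
      assert (E := H1 be). replace (be - be) with 0 in E by ring.
      replace ((be - al) * (be - al)) with ((be - al)^2) by ring. nra.
Qed.

Lemma cplus (f g : R -> R) (x : R) : continuous f x -> continuous g x -> continuous (fun t => f t + g t) x.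
Proof. intros. apply (continuous_plus (K:=R_AbsRing) (V:=R_NormedModule) f g x); auto. Qed.
Lemma cminus (f g : R -> R) (x : R) : continuous f x -> continuous g x -> continuous (fun t => f t - g t) x.
Proof. intros. apply (continuous_minus (K:=R_AbsRing) (V:=R_NormedModule) f g x); auto. Qed.
Lemma cmult (f g : R -> R) (x : R) : continuous f x -> continuous g x -> continuous (fun t => f t * g t) x.
Proof. intros. apply (continuous_mult (K:=R_AbsRing) f g x); auto. Qed.
Lemma cdiv (f g : R -> R) (x : R) : continuous f x -> continuous g x -> g x <> 0 -> continuous (fun t => f t / g t) x.
Proof. intros. unfold Rdiv. apply cmult. auto. apply continuous_Rinv_comp; auto. Qed.
Lemma copp (f : R -> R) (x : R) : continuous f x -> continuous (fun t => - f t) x.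
Proof. intros. apply (continuous_opp (K:=R_AbsRing) (V:=R_NormedModule) f x); auto. Qed.
Lemma cabs (f : R -> R) (x : R) : continuous f x -> continuous (fun t => Rabs (f t)) x.
Proof. apply continuous_Rabs_comp. Qed.
Lemma cconst (k x : R) : continuous (fun _ => k) x.
Proof. apply continuous_const. Qed.
Lemma cid (x : R) : continuous (fun t : R => t) x.
Proof. apply continuous_id. Qed.

Ltac cont := lazymatch goal with
  | |- continuous (fun t => _ + _) _ => apply cplus; cont
  | |- continuous (fun t => _ - _) _ => apply cminus; cont
  | |- continuous (fun t => - _) _ => apply copp; cont
  | |- continuous (fun t => _ * _) _ => apply cmult; cont
  | |- continuous (fun t => _ / 2) _ => apply cdiv; [cont | apply cconst | lra]
  | |- continuous (fun t => Rabs _) _ => apply cabs; cont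
  | |- continuous (fun t => t) _ => apply cid
  | |- continuous (fun t => _) _ => apply cconst
  end.

Lemma zc_cont M c rM al be x : continuous (zc M c rM al be) x.
Proof.
  unfold zc. cont.
Qed.

Lemma rzc_cont a M c rM al be x : 1 + zc M c rM al be x <> 0 ->
  continuous (fun t => r a (zc M c rM al be t)) x.
Proof.
  intros H. unfold r. apply cdiv. apply cmult. apply cconst. apply zc_cont.
  apply cplus. apply cconst. apply zc_cont. exact H.
Qed.

Lemma k_pos (a m : R) (ha : a < 0) (hm : -1 < m < 0) : 0 < r a m.
Proof.
  unfold r, Rdiv. apply Rmult_lt_0_compat. nra. apply Rinv_0_lt_compat. lra.
Qed.

Lemma c_neg (a m : R) (ha : a < 0) (hm : -1 < m < 0) : a * r a m < 0.
Proof. pose proof (k_pos a m ha hm). nra. Qed.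

Lemma rM_neg (a : R) (ha : a < 0) M : 0 < M -> r a M < 0.
Proof.
  intros. unfold r, Rdiv. assert (0 < / (1 + M)) by (apply Rinv_0_lt_compat; lra).
  assert (a * M < 0) by nra.
  replace 0 with (0 * / (1 + M)) by ring. apply Rmult_lt_compat_r; lra.
Qed.

Lemma r_dec (a : R) (ha : a < 0) x y : 0 <= x -> x < y -> r a y < r a x.
Proof.
  intros. unfold r.
  replace (a * y / (1 + y)) with (a - a * / (1 + y)) by (field; lra).
  replace (a * x / (1 + x)) with (a - a * / (1 + x)) by (field; lra).
  assert (/ (1 + y) < / (1 + x)) by (apply Rinv_lt_contravar; nra). nra.
Qed.

Lemma H1c (a m : R) (ha : a < 0) (hm : -1 < m < 0) M : 0 < M -> forall s,
  M + (a * r a m / 2) * (s - alpha_p a m M)^2 = r a M * s + (a * r a m / 2) * (s - beta_p a m M)^2.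
Proof.
  intros HM s. unfold alpha_p, beta_p, r. field. repeat split; lra.
Qed.

Lemma H2c (a m : R) (ha : a < 0) (hm : -1 < m < 0) M : 0 < M -> r a M * (alpha_p a m M + beta_p a m M) = 2 * M.
Proof.
  intros HM. unfold alpha_p, beta_p, r. field. repeat split; lra.
Qed.

Lemma F1c (a m : R) (ha : a < 0) (hm : -1 < m < 0) M : 0 < M -> (a * r a m) * (beta_p a m M - alpha_p a m M) = r a M.
Proof.
  intros HM. unfold alpha_p, beta_p, r. field. repeat split; lra.
Qed.

Lemma ab_lt (a m : R) (ha : a < 0) (hm : -1 < m < 0) M : 0 < M -> alpha_p a m M < beta_p a m M.
Proof.
  intros HM. pose proof (F1c a m ha hm M HM). pose proof (c_neg a m ha hm). pose proof (rM_neg a ha M HM). nra.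
Qed.

Lemma z_zz (a m : R) (ha : a < 0) (hm : -1 < m < 0) M t : z_p a m M t = zz M (a * r a m) (r a M) (alpha_p a m M) (beta_p a m M) t.
Proof. reflexivity. Qed.

Lemma integrand_eq (a m : R) (ha : a < 0) (hm : -1 < m < 0) M : 0 < M ->
  (fun s => r a (z_p a m M s)) =
  (fun s => r a (zc M (a * r a m) (r a M) (alpha_p a m M) (beta_p a m M) s)).
Proof.
  intros HM. apply functional_extensionality. intros s. rewrite (z_zz a m ha hm).
  rewrite zz_zc. reflexivity. apply ab_lt; auto. apply H1c; auto.
Qed.

Lemma zz_nonneg_c (a m : R) (ha : a < 0) (hm : -1 < m < 0) M t : 0 < M -> beta_p a m M < 0 -> t <= 0 ->
  0 <= zz M (a * r a m) (r a M) (alpha_p a m M) (beta_p a m M) t.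
Proof.
  intros. apply zz_nonneg; try lra; [apply c_neg | apply rM_neg | apply ab_lt | apply H1c | apply H2c]; auto.
Qed.

Lemma cont_c (a m : R) (ha : a < 0) (hm : -1 < m < 0) M x : 0 < M -> beta_p a m M < 0 -> x <= 0 ->
  continuous (fun s => r a (zc M (a * r a m) (r a M) (alpha_p a m M) (beta_p a m M) s)) x.
Proof.
  intros. apply rzc_cont. rewrite <- zz_zc. pose proof (zz_nonneg_c a m ha hm M x). lra.
  apply ab_lt; auto. apply H1c; auto.
Qed.

Lemma part1 (a m : R) (ha : a < 0) (hm : -1 < m < 0) M1 M2 : 0 < M1 -> M1 < M2 ->
  beta_p a m M1 < 0 -> beta_p a m M2 < 0 -> L a M1 m > L a M2 m.
Proof.
  intros HM1 HM Hb1 Hb2. unfold L.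
  rewrite (integrand_eq a m ha hm M1 HM1), (integrand_eq a m ha hm M2 ltac:(lra)).
  apply RInt_lt. lra.
  - intros x Hx. apply cont_c; lra.
  - intros x Hx. apply cont_c; lra.
  - intros x Hx. rewrite <- !zz_zc.
    + apply r_dec. lra. apply zz_nonneg_c; lra.
      apply zz_lt; try lra.
      all: first [apply c_neg | apply rM_neg | apply ab_lt | apply H1c | apply H2c | apply r_dec].
      all: try assumption; lra.
Qed.

Lemma r0 (a : R) : r a 0 = 0.
Proof. unfold r, Rdiv. ring. Qed.

Lemma part2 (a m : R) (ha : a < 0) (hm : -1 < m < 0) : L a 0 m = 0.
Proof.
  unfold L. rewrite (RInt_ext _ (fun _ => 0)).
  - rewrite RInt_const. unfold scal; simpl. unfold mult; simpl. ring.
  - intros x _. unfold z_p.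
    assert (E : alpha_p a m 0 = beta_p a m 0) by (unfold alpha_p, beta_p, Rdiv; ring).
    destruct (Rle_dec x (alpha_p a m 0)). apply r0.
    destruct (Rle_dec x (beta_p a m 0)). lra.
    rewrite r0. rewrite Rmult_0_l. apply r0.
Qed.


Definition G (a b : R) : R := a + a * ln (1 - b) / b.

Lemma int_line a b : a < 0 -> b < 0 ->
  RInt (fun s => r a (b * s)) (-1) 0 = G a b.
Proof.
  intros ha hb. apply is_RInt_unique.
  set (F := fun s => a * s - (a / b) * ln (1 + b * s)).
  replace (G a b) with (minus (F 0) (F (-1))).
  2:{ unfold F, G, minus, plus, opp; simpl.
      replace (1 + b * 0) with 1 by ring. rewrite ln_1.
      replace (1 + b * -1) with (1 - b) by ring. field. lra. }
  apply (is_RInt_derive (V:=R_CompleteNormedModule) F).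
  - intros x Hx. rewrite Rmin_left in Hx by lra. rewrite Rmax_right in Hx by lra.
    unfold F. auto_derive.
    + nra.
    + unfold r. field. split; nra.
  - intros x Hx. rewrite Rmin_left in Hx by lra. rewrite Rmax_right in Hx by lra.
    unfold r. apply cdiv. apply cmult. apply cconst. apply cmult. apply cconst. apply cid.
    apply cplus. apply cconst. apply cmult. apply cconst. apply cid. nra.
Qed.

Lemma G_cont a : a < 0 -> continuous (G a) a.
Proof.
  intros ha. unfold G. apply cplus. apply cconst. apply cdiv.
  - apply cmult. apply cconst.
    apply (continuous_comp (fun t => 1 - t) ln). apply cminus. apply cconst. apply cid.
    apply continuous_ln. lra.
  - apply cid.
  - lra.
Qed.

Lemma r_lim a : is_lim (r a) p_infty a.
Proof.
  assert (Hinv : is_lim (fun M => / (1 + M)) p_infty 0).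
  { replace (Finite 0) with (Rbar_inv p_infty) by reflexivity.
    apply is_lim_inv.
    - eapply is_lim_plus. apply is_lim_const. apply is_lim_id. simpl. reflexivity.
    - discriminate. }
  apply is_lim_ext_loc with (fun M => a - a * / (1 + M)).
  - exists 0. intros x Hx. unfold r. field. lra.
  - replace (Finite a) with (Finite (a - a * 0)) by (f_equal; ring).
    apply is_lim_minus'. apply is_lim_const. exact (is_lim_scal_l _ a _ _ Hinv).
Qed.

Lemma beta_big a m : a < 0 -> -1 < m < 0 ->
  exists M0, 0 < M0 /\ forall M, M0 < M -> beta_p a m M < -1.
Proof.
  intros ha hm.
  set (K := (1 + m) / (2 * a * m)).
  assert (HK : 0 < K).
  { unfold K, Rdiv. apply Rmult_lt_0_compat. lra. apply Rinv_0_lt_compat. nra. }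
  exists (1 - a * (1 + K)). split. nra.
  intros M HM.
  assert (E : beta_p a m M = (1 + M) * / a + K * (M / (1 + M))).
  { unfold beta_p, K. field. repeat split; nra. }
  rewrite E.
  assert (Hu : a * / a = 1) by (field; lra).
  assert (Hu2 : / a < 0) by (apply Rinv_lt_0_compat; lra).
  assert (T1 : (1 + M) * / a < - (1 + K)).
  { assert (0 < (1 + M) + (1 + K) * a) by nra.
    assert ((1 + M) * / a + (1 + K) = / a * ((1 + M) + (1 + K) * a)).
    { replace ((1 + M) * / a + (1 + K)) with ((1 + M) * / a + (1 + K) * (a * / a)) by (rewrite Hu; ring). ring. }
    nra. }
  assert (T2 : M / (1 + M) < 1).
  { apply (Rmult_lt_reg_r (1 + M)). nra. unfold Rdiv. rewrite Rmult_assoc, Rinv_l by nra. lra. }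
  nra.
Qed.

Lemma part3 a m : a < 0 -> -1 < m < 0 ->
  is_lim (fun M => L a M m) p_infty (a + ln (1 - a)).
Proof.
  intros ha hm.
  replace (a + ln (1 - a)) with (G a a) by (unfold G; field; lra).
  apply is_lim_ext_loc with (fun M => G a (r a M)).
  - destruct (beta_big a m ha hm) as [M0 [HM0 HB]]. exists M0. intros M HM.
    unfold L. rewrite <- int_line; auto. 2: apply rM_neg; lra.
    apply RInt_ext. intros x Hx. rewrite Rmin_left in Hx by lra. rewrite Rmax_right in Hx by lra.
    pose proof (HB M HM). pose proof (ab_lt a m ha hm M ltac:(lra)).
    unfold z_p. destruct (Rle_dec x (alpha_p a m M)). lra.
    destruct (Rle_dec x (beta_p a m M)). lra. reflexivity.
  - apply is_lim_comp_continuous. apply r_lim. apply G_cont; auto.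
Qed.

Theorem lemma3p12 (a m : R) (ha : a < 0) (hm : -1 < m < 0) :
  (forall M1 M2 : R, 0 < M1 -> M1 < M2 ->
     beta_p a m M1 < 0 -> beta_p a m M2 < 0 -> L a M1 m > L a M2 m) /\
  L a 0 m = 0 /\
  is_lim (fun M => L a M m) p_infty (a + ln (1 - a)).
Proof.
  split. intros; apply part1; auto.
  split. apply part2; auto. apply part3; auto.
Qed.
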